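(* Let $n\ge 1$ be an integer and suppose that $A\subseteq\mathbb{Z}_5^n$ is sum-free. If $|A|>\frac32\cdot5^{n-1}$, then for every maximal proper subgroup $H$ of $\mathbb{Z}_5^n$, the number of $H$-cosets having non-empty intersection with $A$ is not exactly three.
   Context: $\mathbb{Z}_5^n$ denotes the elementary abelian $5$-group of rank $n$. A subset $S$ of an abelian group is sum-free if there are no $x,y,z\in S$ (not necessarily distinct) with $x+y=z$. *)

(* Defs.v *)
From mathcomp Require Import all_boot all_order all_algebra.
Set Implicit Arguments. Unset Strict Implicit. Unset Printing Implicit Defensive.
Import GRing.Theory.
Local Open Scope ring_scope.

Definition Z5n (n : nat) := 'rV['F_5]_n.

Definition sum_free (n : nat) (S : {set Z5n n}) : Prop :=
  forall x y z, x \in S -> y \in S -> z \in S -> x + y <> z.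

Definition is_subgroup (n : nat) (H : {set Z5n n}) : Prop :=
  0 \in H /\ (forall x y, x \in H -> y \in H -> x - y \in H).

Definition maximal_proper_subgroup (n : nat) (H : {set Z5n n}) : Prop :=
  [/\ is_subgroup H, H != [set: Z5n n] &
      forall K : {set Z5n n}, is_subgroup K -> H \subset K ->
        K = H \/ K = [set: Z5n n]].

Definition coset_add (n : nat) (H : {set Z5n n}) (x : Z5n n) : {set Z5n n} :=
  [set x + h | h in H].

Definition cosets_meeting (n : nat) (H A : {set Z5n n}) : {set {set Z5n n}} :=
  [set C in [set coset_add H x | x in [set: Z5n n]] | C :&: A != set0].

(* Main.v *)
Require Import Defs.
From mathcomp Require Import all_boot all_order all_algebra.
From mathcomp Require Import zify.
Set Implicit Arguments. Unset Strict Implicit. Unset Printing Implicit Defensive.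
Import GRing.Theory.

Lemma comb (a0 a1 a2 a3 a4 N : nat) (b0 b1 b2 b3 b4 : bool) :
  b0 || (a0 == 0) -> b1 || (a1 == 0) -> b2 || (a2 == 0) -> b3 || (a3 == 0) -> b4 || (a4 == 0) ->
  b0 + b1 + b2 + b3 + b4 == 3 ->
  b0 ==> (a0 + a0 <= N) ->
  b0 ==> (a1 + a1 <= N) ->
  b0 ==> (a2 + a2 <= N) ->
  b0 ==> (a3 + a3 <= N) ->
  b0 ==> (a4 + a4 <= N) ->
  b1 ==> (a0 + a1 <= N) ->
  b1 ==> (a1 + a2 <= N) ->
  b1 ==> (a2 + a3 <= N) ->
  b1 ==> (a3 + a4 <= N) ->
  b1 ==> (a4 + a0 <= N) ->
  b2 ==> (a0 + a2 <= N) ->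
  b2 ==> (a1 + a3 <= N) ->
  b2 ==> (a2 + a4 <= N) ->
  b2 ==> (a3 + a0 <= N) ->
  b2 ==> (a4 + a1 <= N) ->
  b3 ==> (a0 + a3 <= N) ->
  b3 ==> (a1 + a4 <= N) ->
  b3 ==> (a2 + a0 <= N) ->
  b3 ==> (a3 + a1 <= N) ->
  b3 ==> (a4 + a2 <= N) ->
  b4 ==> (a0 + a4 <= N) ->
  b4 ==> (a1 + a0 <= N) ->
  b4 ==> (a2 + a1 <= N) ->
  b4 ==> (a3 + a2 <= N) ->
  b4 ==> (a4 + a3 <= N) ->
  b0 ==> (a0 + a0 <= N) ->
  b1 ==> (a0 + a1 <= N) ->
  b2 ==> (a0 + a2 <= N) ->
  b3 ==> (a0 + a3 <= N) ->
  b4 ==> (a0 + a4 <= N) ->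
  b1 ==> (a1 + a0 <= N) ->
  b2 ==> (a1 + a1 <= N) ->
  b3 ==> (a1 + a2 <= N) ->
  b4 ==> (a1 + a3 <= N) ->
  b0 ==> (a1 + a4 <= N) ->
  b2 ==> (a2 + a0 <= N) ->
  b3 ==> (a2 + a1 <= N) ->
  b4 ==> (a2 + a2 <= N) ->
  b0 ==> (a2 + a3 <= N) ->
  b1 ==> (a2 + a4 <= N) ->
  b3 ==> (a3 + a0 <= N) ->
  b4 ==> (a3 + a1 <= N) ->
  b0 ==> (a3 + a2 <= N) ->
  b1 ==> (a3 + a3 <= N) ->
  b2 ==> (a3 + a4 <= N) ->
  b4 ==> (a4 + a0 <= N) ->
  b0 ==> (a4 + a1 <= N) ->
  b1 ==> (a4 + a2 <= N) ->
  b2 ==> (a4 + a3 <= N) ->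
  b3 ==> (a4 + a4 <= N) ->
  2 * (a0 + a1 + a2 + a3 + a4) <= 3 * N.
Proof. by case: b0; case: b1; case: b2; case: b3; case: b4 => /=; intros; lia. Qed.

Local Open Scope ring_scope.

Lemma eqz (V : zmodType) (u v p q : V) : u - v - q = (u - (p + q)) - (v - p).
Proof. rewrite opprB opprD !addrA. rewrite (addrAC (u - p)) subrK. by rewrite addrAC. Qed.

Lemma sum5 (f : 'F_5 -> nat) :
  (\sum_(k : 'F_5) f k = f 0%:R + f 1%:R + f 2%:R + f 3%:R + f 4%:R)%N.
Proof.
rewrite !big_ord_recl big_ord0 addn0 !addnA.
congr (_ + _ + _ + _ + _)%N; congr f; by apply/eqP.
Qed.

Section S.
Variable n : nat.
Local Notation G := ('rV['F_5]_n).
Variable H : {set G}.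
Hypothesis H0 : (0:G) \in H.
Hypothesis HB : forall x y : G, x \in H -> y \in H -> x - y \in H.

Lemma HN x : x \in H -> - x \in H.
Proof. by move=> hx; rewrite -sub0r HB. Qed.
Lemma HD x y : x \in H -> y \in H -> x + y \in H.
Proof. by move=> hx hy; rewrite -[y]opprK HB // HN. Qed.
Lemma HMn x m : x \in H -> x *+ m \in H.
Proof. move=> hx; elim: m => [|m IH]; first by rewrite mulr0n. by rewrite mulrS HD. Qed.
Lemma HZ (c : 'F_5) x : x \in H -> c *: x \in H.
Proof. by move=> hx; rewrite -(natr_Zp c) scaler_nat HMn. Qed.

Lemma mem_coset x y : (y \in coset_add H x) = (y - x \in H).
Proof.
apply/imsetP/idP => [[h hh ->]|hy]; first by rewrite addrC addKr.
by exists (y - x) => //; rewrite addrC subrK.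
Qed.

Lemma coset_eq x y : x - y \in H -> coset_add H x = coset_add H y.
Proof.
move=> hxy; apply/setP => z; rewrite !mem_coset; apply/idP/idP => h.
  have -> : z - y = (z - x) + (x - y) by rewrite addrA subrK.
  exact: HD.
have -> : z - x = (z - y) - (x - y) by rewrite opprB addrA subrK.
exact: HB.
Qed.

Lemma card_coset x : #|coset_add H x| = #|H|.
Proof. exact: card_imset (addrI x). Qed.

Variable a : G.
Hypothesis aH : a \notin H.

Lemma uniqk x k l : x - k *: a \in H -> x - l *: a \in H -> k = l.
Proof.
move=> hk hl; have := HB hl hk.
rewrite opprB addrC addrA subrK -scalerBl => h.
case: (k =P l) => // /eqP; rewrite -subr_eq0 => nz.
have : (k - l)^-1 *: ((k - l) *: a) \in H by apply: HZ.
by rewrite scalerA mulVf // scale1r (negbTE aH).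
Qed.

Hypothesis Hmax : forall K : {set G}, is_subgroup K -> H \subset K ->
        K = H \/ K = [set: G].

Lemma cover x : exists k, x - k *: a \in H.
Proof.
pose K := [set x : G | [exists k : 'F_5, x - k *: a \in H]].
have sK : is_subgroup K.
  split.
    by rewrite inE; apply/existsP; exists 0; rewrite scale0r subr0.
  move=> u v; rewrite !inE => /existsP [k hk] /existsP [l hl].
  apply/existsP; exists (k - l).
  have -> : u - v - (k - l) *: a = (u - k *: a) - (v - l *: a).
    rewrite scalerBl !opprB addrACA [RHS]addrACA; congr (_ + _); exact: addrC.
  exact: HB.
have HK : H \subset K.
  by apply/subsetP => u hu; rewrite inE; apply/existsP; exists 0; rewrite scale0r subr0.
case: (Hmax sK HK) => [eK|eK].
  have : a \in K by rewrite inE; apply/existsP; exists 1; rewrite scale1r subrr.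
  by rewrite eK (negbTE aH).
have : x \in K by rewrite eK inE.
by rewrite inE => /existsP [k hk]; exists k.
Qed.

Definition Cs (k : 'F_5) := coset_add H (k *: a).

Lemma partition_card (B : {set G}) : #|B| = (\sum_(k : 'F_5) #|Cs k :&: B|)%N.
Proof.
have e1 k : #|Cs k :&: B| = (\sum_(x in B) (x \in Cs k))%N.
  rewrite -sum1_card big_mkcond [RHS]big_mkcond /=.
  apply: eq_bigr => x _; rewrite in_setI.
  by case: (x \in Cs k); case: (x \in B).
under eq_bigr do rewrite e1.
rewrite exchange_big /= -sum1_card.
apply: eq_bigr => x _.
have [k0 hk0] := cover x.
rewrite (bigD1 k0) //= big1 ?addn0 ?/Cs ?mem_coset ?hk0 //.
move=> k nk; rewrite mem_coset; case hk: (_ \in H) => //.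
by rewrite (uniqk hk hk0) eqxx in nk.
Qed.

Lemma Cs_inj : injective Cs.
Proof.
move=> k l e.
have : k *: a \in Cs l by rewrite -e /Cs mem_coset subrr.
rewrite /Cs mem_coset => h.
by apply: (uniqk (x := k *: a)); rewrite ?subrr.
Qed.

Lemma count_bound (X C A : {set G}) (g : G -> G) : injective g ->
  (forall y, y \in X -> (g y \in C) && (g y \notin A)) ->
  (#|X| + #|C :&: A| <= #|C|)%N.
Proof.
move=> ig gX; rewrite -(card_imset X ig) -cardsUI.
have -> : g @: X :&: (C :&: A) = set0.
  apply/setP => y; rewrite in_set0 !in_setI; apply/negbTE.
  apply/negP => /andP [/imsetP [z zX ->] /andP [_ zA]].
  by have /andP [_ /negP] := gX z zX.
rewrite cards0 addn0; apply: subset_leq_card; apply/subsetP => y.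
rewrite in_setU => /orP [/imsetP [z zX ->]|]; first by case/andP: (gX z zX).
by rewrite in_setI => /andP [].
Qed.

Variable A : {set G}.
Hypothesis sfA : forall x y z, x \in A -> y \in A -> z \in A -> x + y <> z.

Definition Ak k := Cs k :&: A.

Lemma L2 i j x : x \in Ak i -> (#|Ak j| + #|Ak (i + j)%R| <= #|H|)%N.
Proof.
rewrite in_setI /Cs mem_coset => /andP [hx xA].
rewrite -(card_coset ((i + j) *: a)).
apply: count_bound (addrI x) _ => y; rewrite in_setI /Cs mem_coset => /andP [hy yA].
apply/andP; split.
  by move: (HD hx hy); rewrite mem_coset scalerDl opprD addrACA.
by apply/negP => h; apply: (sfA xA yA h).
Qed.

Lemma L1 i j z : z \in Ak (i + j) -> (#|Ak i| + #|Ak j| <= #|H|)%N.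
Proof.
rewrite in_setI /Cs mem_coset => /andP [hz zA].
rewrite -(card_coset (j *: a)).
have ig : injective (fun y => z - y) by move=> y y' /addrI /oppr_inj.
apply: count_bound ig _ => y; rewrite in_setI /Cs mem_coset => /andP [hy yA].
apply/andP; split.
  rewrite mem_coset.
  have -> : z - y - j *: a = (z - (i + j) *: a) - (y - i *: a).
    by rewrite scalerDl; exact: eqz.
  exact: HB.
by apply/negP => h; apply: (sfA h yA zA); rewrite subrK.
Qed.

End S.

Theorem proposition1 (n : nat) (A : {set Z5n n}) :
  (1 <= n)%N -> sum_free A -> (3 * 5 ^ n.-1 < 2 * #|A|)%N ->
  forall H : {set Z5n n}, maximal_proper_subgroup H ->
    #|cosets_meeting H A| <> 3%N.
Proof.
move=> n1 sfA hA H [[H0 HB] HnT Hmax] h3.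
have [a _ aH] : exists2 a, a \in [set: Z5n n] & a \notin H.
  apply/subsetPn; apply: contra HnT => s; by rewrite eqEsubset s subsetT.
have hN : (5 * #|H| = 5 ^ n)%N.
  have := partition_card H0 HB aH Hmax [set: Z5n n].
  rewrite cardsT.
  under eq_bigr do rewrite setIT card_coset.
  rewrite sum_nat_const card_Fp // => <-.
  by rewrite card_mx card_Fp // mul1n.
have hAs := partition_card H0 HB aH Hmax A.
have hcnt : #|cosets_meeting H A| = #|[set k | Ak H a A k != set0]|.
  have -> : cosets_meeting H A = Cs H a @: [set k | Ak H a A k != set0].
    apply/setP => D; rewrite /cosets_meeting inE; apply/andP/imsetP.
      move=> [/imsetP [x _ ->] hne].
      have [k hk] := cover H0 HB aH Hmax x.
      have e : coset_add H x = Cs H a k by apply: coset_eq.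
      by exists k => //; rewrite inE /Ak -e.
    move=> [k]; rewrite inE => hk ->; split => //.
    by apply/imsetP; exists (k *: a).
  by rewrite card_imset //; apply: Cs_inj.
have L2n (i j m : nat) : ((i + j) %% 5 = m)%N ->
    (Ak H a A i%:R != set0) ==> (#|Ak H a A j%:R| + #|Ak H a A m%:R| <= #|H|)%N.
  move=> hm; apply/implyP => /set0Pn [x hx].
  rewrite -hm Fp_nat_mod // natrD. have := L2 H0 HB sfA (j%:R) hx. exact.
have L1n (i j m : nat) : ((i + j) %% 5 = m)%N ->
    (Ak H a A m%:R != set0) ==> (#|Ak H a A i%:R| + #|Ak H a A j%:R| <= #|H|)%N.
  move=> hm; apply/implyP => /set0Pn [x hx].
  move: hx; rewrite -hm Fp_nat_mod // natrD => hx. exact: (@L1 _ H HB a A sfA (i%:R) (j%:R) x hx).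
have hS : (\sum_(k : 'F_5) (Ak H a A k != set0) = #|cosets_meeting H A|)%N.
  rewrite hcnt -sum1_card [RHS]big_mkcond /=; apply: eq_bigr => k _.
  by rewrite inE; case: (_ != _).
rewrite sum5 h3 in hS.
have key : (2 * #|A| <= 3 * #|H|)%N.
  rewrite hAs sum5.
  apply: (comb (b0 := Ak H a A 0%:R != set0) (b1 := Ak H a A 1%:R != set0)
    (b2 := Ak H a A 2%:R != set0) (b3 := Ak H a A 3%:R != set0)
    (b4 := Ak H a A 4%:R != set0)).
  1-5: by rewrite cards_eq0 orNb.
  1: by apply/eqP.
  1-25: by apply: L2n.
  all: try by apply: L1n.
have e5 : (5 ^ n = 5 * 5 ^ n.-1)%N by rewrite -expnS prednK.
lia.
Qed.
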